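(* In the setting described in the context, for every fixed $t$ and every fixed realization of $(n,w,h,s)$, the function $u\mapsto f_{t,u}$ is convex on $u>0$.
   Context: Let $K,N$ be positive integers, $B(t),\lambda(t)\ge0$. Fixed $n\in\mathbb R^N$, $w,h\in\mathbb R^K$, and an $N\times K$ real matrix $s$. For $x\in\{\pm1\}^K$: $z=\mathbf 1-x$, $h_u(x)=\sqrt u\sum_kh_kx_k+u\sum_kx_k-\sqrt u\sum_k|h_k|$. $Z_{t,u}=\sum_{x\in\{\pm1\}^K}\exp\bigl(-\frac12\|n+N^{-1/2}B(t)^{1/2}sz\|^2-\frac12\|w+\lambda(t)^{1/2}z\|^2+h_u(x)\bigr)$, $f_{t,u}=\frac1K\ln Z_{t,u}$. *)

(* Defs.v *)
From HB Require Import structures.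
From mathcomp Require Import all_boot all_order all_algebra.
From mathcomp Require Import all_classical all_reals all_analysis.
Set Implicit Arguments. Unset Strict Implicit. Unset Printing Implicit Defensive.
Import Order.TTheory GRing.Theory Num.Theory.
Local Open Scope ring_scope.

Section Model.
Variables (R : realType) (K N : nat).

(* a spin configuration x in {+1,-1}^K is encoded by b : {ffun 'I_K -> bool},
   with x_k = +1 if b k = true and -1 otherwise *)
Definition spin (b : bool) : R := if b then 1 else -1.

Definition zvec (x : {ffun 'I_K -> bool}) (k : 'I_K) : R := 1 - spin (x k).

Definition hu (h : 'I_K -> R) (u : R) (x : {ffun 'I_K -> bool}) : R :=
  Num.sqrt u * (\sum_k h k * spin (x k)) + u * (\sum_k spin (x k))
  - Num.sqrt u * (\sum_k `|h k|).

Definition Ztu (Bt lt : R) (n : 'I_N -> R) (w h : 'I_K -> R)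
    (s : 'M[R]_(N, K)) (u : R) : R :=
  \sum_(x : {ffun 'I_K -> bool})
    expR (- (1/2) * (\sum_(i < N)
              (n i + (Num.sqrt (N%:R))^-1 * Num.sqrt Bt
                      * (\sum_(k < K) s i k * zvec x k)) ^+ 2)
          - (1/2) * (\sum_(k < K) (w k + Num.sqrt lt * zvec x k) ^+ 2)
          + hu h u x).

Definition ftu (Bt lt : R) (n : 'I_N -> R) (w h : 'I_K -> R)
    (s : 'M[R]_(N, K)) (u : R) : R :=
  (K%:R)^-1 * ln (Ztu Bt lt n w h s u).

End Model.

Definition convex_on_pos (R : realType) (f : R -> R) : Prop :=
  forall (u v a : R), 0 < u -> 0 < v -> 0 <= a -> a <= 1 ->
    f (a * u + (1 - a) * v) <= a * f u + (1 - a) * f v.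

(* Main.v *)
Require Import Defs.
From HB Require Import structures.
From mathcomp Require Import all_boot all_order all_algebra.
From mathcomp Require Import all_classical all_reals all_analysis.
From mathcomp Require Import ring lra.
Import Order.TTheory GRing.Theory Num.Theory.
Local Open Scope ring_scope.

Lemma expR_conv (R : realType) (a X Y : R) : 0 <= a -> a <= 1 ->
  expR (a * X + (1 - a) * Y) <= a * expR X + (1 - a) * expR Y.
Proof.
move=> a0 a1.
set M := a * X + (1 - a) * Y.
have hX : expR M * (1 + (X - M)) <= expR X.
  rewrite [expR X](_ : _ = expR M * expR (X - M)); last first.
    by rewrite -expRD; congr expR; rewrite /M; ring.
  by rewrite ler_wpM2l ?expR_ge0 ?expR_ge1Dx.
have hY : expR M * (1 + (Y - M)) <= expR Y.
  rewrite [expR Y](_ : _ = expR M * expR (Y - M)); last first.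
    by rewrite -expRD; congr expR; rewrite /M; ring.
  by rewrite ler_wpM2l ?expR_ge0 ?expR_ge1Dx.
have e1 := ler_wpM2l a0 hX.
have a1' : 0 <= 1 - a by lra.
have e2 := ler_wpM2l a1' hY.
have -> : expR M = a * (expR M * (1 + (X - M))) + (1 - a) * (expR M * (1 + (Y - M))).
  rewrite /M; ring.
lra.
Qed.

Lemma sum_pos (R : realType) (T : finType) (t0 : T) (P : T -> R) :
  0 < \sum_x expR (P x).
Proof.
rewrite (bigD1 t0) //=.
have h1 := expR_gt0 (P t0).
have h2 : 0 <= \sum_(x | x != t0) expR (P x) by apply: sumr_ge0 => x _; exact: expR_ge0.
lra.
Qed.

Lemma key (R : realType) (T : finType) (t0 : T) (F : R -> T -> R) (u v m a : R) :
  0 <= a -> a <= 1 -> (forall x, F m x <= a * F u x + (1 - a) * F v x) ->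
  ln (\sum_x expR (F m x)) <= a * ln (\sum_x expR (F u x)) + (1 - a) * ln (\sum_x expR (F v x)).
Proof.
move=> a0 a1 hF.
have SP := @sum_pos R T t0 (F u); have SQ := @sum_pos R T t0 (F v); have SM := @sum_pos R T t0 (F m).
set P := \sum_x expR (F u x) in SP *; set Q := \sum_x expR (F v x) in SQ *.
rewrite -ler_expR lnK ?posrE //.
set E := expR _.
have Epos : 0 < E by exact: expR_gt0.
apply: (@le_trans _ _ (\sum_x (a * (E * (expR (F u x) / P)) + (1 - a) * (E * (expR (F v x) / Q))))).
  apply: ler_sum => x _.
  apply: (@le_trans _ _ (expR (a * F u x + (1 - a) * F v x))); first by rewrite ler_expR.
  have -> : a * F u x + (1 - a) * F v x =
     (a * ln P + (1 - a) * ln Q) + (a * (F u x - ln P) + (1 - a) * (F v x - ln Q)) by ring.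
  rewrite expRD -/E.
  rewrite [X in _ <= X](_ : _ = E * (a * (expR (F u x) / P) + (1 - a) * (expR (F v x) / Q))); last by ring.
  rewrite ler_wpM2l ?(ltW Epos) //.
  have -> : expR (F u x) / P = expR (F u x - ln P) by rewrite expRB lnK ?posrE.
  have -> : expR (F v x) / Q = expR (F v x - ln Q) by rewrite expRB lnK ?posrE.
  exact: expR_conv.
rewrite big_split /= -!mulr_sumr -!mulr_suml.
rewrite -/P -/Q !mulfV ?gt_eqF // !mulr1.
lra.
Qed.

Lemma sqrt_conc (R : realType) (u v a : R) : 0 < u -> 0 < v -> 0 <= a -> a <= 1 ->
  a * Num.sqrt u + (1 - a) * Num.sqrt v <= Num.sqrt (a * u + (1 - a) * v).
Proof.
move=> u0 v0 a0 a1.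
have su := sqrtr_ge0 u; have sv := sqrtr_ge0 v.
have hu := sqr_sqrtr (ltW u0); have hv := sqr_sqrtr (ltW v0).
have L0 : 0 <= a * Num.sqrt u + (1 - a) * Num.sqrt v by nra.
rewrite -(ger0_norm L0) -sqrtr_sqr ler_sqrt; last by nra.
rewrite -{2}hu -{2}hv.
have : 0 <= a * (1 - a) * (Num.sqrt u - Num.sqrt v) ^+ 2.
  apply: mulr_ge0; [apply: mulr_ge0; lra | exact: sqr_ge0].
have e : a * Num.sqrt u ^+ 2 + (1 - a) * Num.sqrt v ^+ 2 - (a * Num.sqrt u + (1 - a) * Num.sqrt v) ^+ 2
   = a * (1 - a) * (Num.sqrt u - Num.sqrt v) ^+ 2 by ring.
lra.
Qed.

Lemma lin_step (R : realType) (C S1 S2 S3 u v a : R) : S1 - S3 <= 0 ->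
  a * Num.sqrt u + (1 - a) * Num.sqrt v <= Num.sqrt (a * u + (1 - a) * v) ->
  C + (Num.sqrt (a * u + (1 - a) * v) * S1 + (a * u + (1 - a) * v) * S2
       - Num.sqrt (a * u + (1 - a) * v) * S3)
  <= a * (C + (Num.sqrt u * S1 + u * S2 - Num.sqrt u * S3))
     + (1 - a) * (C + (Num.sqrt v * S1 + v * S2 - Num.sqrt v * S3)).
Proof.
move=> D sc.
have sm : Num.sqrt (a * u + (1 - a) * v) * (S1 - S3) <=
   (a * Num.sqrt u + (1 - a) * Num.sqrt v) * (S1 - S3) by rewrite ler_wnM2r.
set q := Num.sqrt (a * u + (1 - a) * v) in sc sm *.
set su := Num.sqrt u in sc sm *. set sv := Num.sqrt v in sc sm *.
have e : a * (C + (su * S1 + u * S2 - su * S3)) + (1 - a) * (C + (sv * S1 + v * S2 - sv * S3))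
  - (C + (q * S1 + (a * u + (1 - a) * v) * S2 - q * S3))
  = (a * su + (1 - a) * sv) * (S1 - S3) - q * (S1 - S3) by ring.
lra.
Qed.

Definition Gf (R : realType) (K N : nat) (Bt lt : R) (n : 'I_N -> R) (w h : 'I_K -> R)
    (s : 'M[R]_(N, K)) (u : R) (x : {ffun 'I_K -> bool}) : R :=
  - (1/2) * (\sum_(i < N)
              (n i + (Num.sqrt (N%:R))^-1 * Num.sqrt Bt
                      * (\sum_(k < K) s i k * zvec R x k)) ^+ 2)
          - (1/2) * (\sum_(k < K) (w k + Num.sqrt lt * zvec R x k) ^+ 2)
          + hu h u x.

Theorem lemma4 (R : realType) (K N : nat) (K_gt0 : (0 < K)%N) (N_gt0 : (0 < N)%N)
    (B lambda : R -> R) (B_ge0 : forall t, 0 <= B t) (lambda_ge0 : forall t, 0 <= lambda t)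
    (t : R) (n : 'I_N -> R) (w h : 'I_K -> R) (s : 'M[R]_(N, K)) :
  convex_on_pos (fun u => ftu (B t) (lambda t) n w h s u).
Proof.
move=> u v a u0 v0 a0 a1.
rewrite /ftu.
have Kp : 0 < (K%:R : R)^-1 by rewrite invr_gt0 ltr0n.
pose G := @Gf R K N (B t) (lambda t) n w h s.
have kk : ln (\sum_x expR (G (a * u + (1 - a) * v) x)) <=
   a * ln (\sum_x expR (G u x)) + (1 - a) * ln (\sum_x expR (G v x)).
  apply: (@key R _ [ffun=> true] G) => // x.
  rewrite /G /Gf /hu.
  set C := (- _ * _ - _ * _).
  set S1 := \sum_k h k * spin R (x k).
  set S2 := \sum_k spin R (x k).
  set S3 := \sum_k `|h k|.
  have D : S1 - S3 <= 0.
    rewrite subr_le0; apply: ler_sum => k _; rewrite /spin; case: (x k).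
      by rewrite mulr1 ler_norm.
    by rewrite mulrN1 -normrN ler_norm.
  have sc := @sqrt_conc R _ _ _ u0 v0 a0 a1.
  exact: (@lin_step R C S1 S2 S3 u v a D sc).
change ((K%:R)^-1 * ln (\sum_x expR (G (a * u + (1 - a) * v) x)) <=
   a * ((K%:R)^-1 * ln (\sum_x expR (G u x))) + (1 - a) * ((K%:R)^-1 * ln (\sum_x expR (G v x)))).
have -> : forall X Y : R, a * ((K%:R)^-1 * X) + (1 - a) * ((K%:R)^-1 * Y)
   = (K%:R)^-1 * (a * X + (1 - a) * Y) by move=> X Y; ring.
by rewrite ler_wpM2l ?(ltW Kp).
Qed.
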